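(* Let $J$ be an abelian topological semigroup with identity $0$ and $X$ a topological vector space over $\mathbf{C}$. If $\phi\in P^n(J,X)$ and there is $k$ with $0\le k<n$ such that $\phi(ms)=m^k\phi(s)$ for all $m\in\mathbf{Z}_+$ and $s\in J$, then $\phi\in P^k(J,X)$.
   Context: $\mathbf{Z}_+=\{0,1,2,\dots\}$. A continuous $p:J\to X$ is a polynomial of degree at most $n$ if for all $s,t\in J$ the map $m\mapsto p(s+mt)$, $m\in\mathbf{Z}_+$, is a polynomial in $m$ of degree at most $n$ with coefficients in $X$; $P^n(J,X)$ is the space of such polynomials. *)

(* Defs.v *)
From HB Require Import structures.
From mathcomp Require Import all_boot all_order all_algebra.
From mathcomp Require Import complex.
From mathcomp Require Import all_classical all_reals all_analysis.
Set Implicit Arguments. Unset Strict Implicit. Unset Printing Implicit Defensive.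
Import Order.TTheory GRing.Theory Num.Theory.
Import numFieldTopology.Exports.
Local Open Scope ring_scope.
Local Open Scope complex_scope.

(* J : an abelian topological semigroup with identity 0, i.e. a commutative
   additive monoid (nmodType) with a topology for which addition is
   continuous: this is exactly MathComp-Analysis' TopologicalNmodule. *)

Definition is_poly_deg (R : realType) (J : TopologicalNmodule.type)
  (X : topologicalLmodType R[i]) (n : nat) (p : J -> X) : Prop :=
  continuous p /\
  forall s t : J, exists c : 'I_n.+1 -> X,
    forall m : nat, p (s + t *+ m) = \sum_(j < n.+1) ((m%:R : R[i]) ^+ j) *: c j.

(* Main.v *)
Require Import Defs.
From HB Require Import structures.
From mathcomp Require Import all_boot all_order all_algebra.
From mathcomp Require Import complex.
From mathcomp Require Import all_classical all_reals all_analysis.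
Import GRing.Theory Num.Theory.
Local Open Scope ring_scope.
Local Open Scope complex_scope.
Lemma extract (R : realType) (X : lmodType R[i]) (N : nat) (w : 'I_N -> X) :
  forall j, w j = \sum_i (invmx (Vandermonde N (\row_i ((i : nat)%:R : R[i])))) i j *:
     (\sum_(q < N) ((i : nat)%:R : R[i]) ^+ q *: w q).
Proof.
move=> j.
pose a : 'rV[R[i]]_N := \row_i ((i : nat)%:R).
pose V := Vandermonde N a.
have uV : V \in unitmx.
  rewrite unitmxE det_Vandermonde unitfE; apply/prodf_neq0 => i _.
  apply/prodf_neq0 => k ik; rewrite !mxE subr_eq0 eqr_nat.
  by rewrite eq_sym neq_ltn ik.
have E := mulmxV uV.
have E2 : \sum_i invmx V i j *: (\sum_(q < N) ((i : nat)%:R : R[i]) ^+ q *: w q) = w j.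
  under eq_bigr => i _ do rewrite scaler_sumr.
  rewrite exchange_big /= (bigD1 j) //= [X in _ + X]big1 => [|q qj].
    rewrite addr0 -(scale1r (w j)); under eq_bigr => i _ do rewrite scalerA.
    rewrite -scaler_suml; congr (_ *: _).
    have := congr1 (fun M : 'M[R[i]]_N => M j j) E; rewrite !mxE eqxx /= => E1.
      by apply: (etrans _ E1); apply: eq_bigr => i _; rewrite /V !mxE mulrC.
    exact: scale1r.
  under eq_bigr => i _ do rewrite scalerA.
  rewrite -scaler_suml.
  have := congr1 (fun M : 'M[R[i]]_N => M q j) E; rewrite !mxE (negbTE qj) /= => E'.
  have -> : \sum_(i < N) invmx V i j * ((i : nat)%:R : R[i]) ^+ q = 0; last exact: scale0r.
  by apply: (etrans _ E'); apply: eq_bigr => i _; rewrite /V !mxE mulrC.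
by rewrite E2.
Qed.

Lemma uniq_coef (R : realType) (X : lmodType R[i]) (N : nat) (c d : 'I_N -> X) :
  (forall i : 'I_N, \sum_(q < N) ((i : nat)%:R : R[i]) ^+ q *: c q =
                    \sum_(q < N) ((i : nat)%:R : R[i]) ^+ q *: d q) ->
  forall j, c j = d j.
Proof.
move=> H j; apply/eqP; rewrite -subr_eq0; apply/eqP.
rewrite (@extract _ _ _ (fun q => c q - d q) j) big1 // => i _.
under eq_bigr => q _ do rewrite scalerBr.
by rewrite sumrB H subrr scaler0.
Qed.

Theorem lemma2p2 (R : realType) (J : TopologicalNmodule.type)
  (X : topologicalLmodType R[i]) (n k : nat) (phi : J -> X) :
  is_poly_deg n phi ->
  (k < n)%N ->
  (forall (m : nat) (s : J), phi (s *+ m) = ((m%:R : R[i]) ^+ k) *: phi s) ->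
  is_poly_deg k phi.
Proof.
move=> [cont H] kn hom; split => // s t.
have [cf Hcf] : exists cf : J -> J -> 'I_n.+1 -> X, forall s t (m : nat),
    phi (s + t *+ m) = \sum_(j < n.+1) ((m%:R : R[i]) ^+ j) *: cf s t j.
  have H' : forall s, exists f : J -> 'I_n.+1 -> X, forall t (m : nat),
      phi (s + t *+ m) = \sum_(j < n.+1) ((m%:R : R[i]) ^+ j) *: f t j.
    by move=> s0; have [f Hf] := choice (H s0); exists f.
  have [f Hf] := choice H'; by exists f.
pose L := invmx (Vandermonde n.+1 (\row_(i < n.+1) ((i : nat)%:R : R[i]))).
have stepA : forall (a : nat) (l : 'I_n.+1),
    ((a%:R : R[i]) ^+ l) *: cf (s *+ a) t l = ((a%:R : R[i]) ^+ k) *: cf s t l.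
  move=> a l; apply: (@uniq_coef R X n.+1 (fun q => _ ^+ q *: _) (fun q => _ *: _)) => i.
  transitivity (phi (s *+ a + t *+ (i * a))).
    rewrite Hcf; apply: eq_bigr => q _; rewrite scalerA -exprMn natrM //.
  rewrite mulrnA -mulrnDl hom Hcf scaler_sumr; apply: eq_bigr => q _.
  by rewrite !scalerA mulrC.
pose E (l : 'I_n.+1) (p : nat) := \sum_(i < n.+1) L i l *: cf (t *+ i) s (inord p).
have stepB : forall (a : nat) (l : 'I_n.+1),
    cf (s *+ a) t l = \sum_(p < n.+1) ((a%:R : R[i]) ^+ p) *: E l p.
  move=> a l; rewrite (@extract R X n.+1 (cf (s *+ a) t) l) -/L.
  under eq_bigr => i _ do rewrite -Hcf addrC Hcf scaler_sumr.
  rewrite exchange_big /=; apply: eq_bigr => p _.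
  rewrite /E scaler_sumr; apply: eq_bigr => i _.
  by rewrite !scalerA mulrC inord_val.
have zero : forall l : 'I_n.+1, (k < l)%N -> cf s t l = 0.
  move=> l lk.
  pose N := (l + n.+1)%N.
  have kN : (k < N)%N by apply: (leq_trans lk); exact: leq_addr.
  pose W (q : nat) := (if (l <= q)%N then E l (q - l)%N else 0) - (if q == k then cf s t l else 0).
  have claim : forall a : nat, \sum_(q < N) ((a%:R : R[i]) ^+ q) *: W q = 0.
    move=> a; under eq_bigr => q _ do rewrite scalerBr.
    rewrite sumrB [X in _ - X](bigD1 (Ordinal kN)) //= eqxx [X in _ - (_ + X)]big1 => [|q qk]; last first.
      rewrite ifN ?scaler0 //.
    rewrite addr0.
    rewrite -(big_mkord xpredT (fun q => (a%:R : R[i]) ^+ q *: (if (l <= q)%N then E l (q - l)%N else 0))).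
    rewrite (big_cat_nat (leq0n l) (leq_addr _ _)) /=.
    rewrite [X in X + _ - _]big_nat_cond big1 ?add0r => [|q /andP[/andP[_ ql] _]]; last first.
      by rewrite leqNgt ql scaler0.
    rewrite (big_addn 0 _ l) addKn big_mkord -stepA stepB scaler_sumr.
    apply/eqP; rewrite subr_eq0; apply/eqP; apply: eq_bigr => p _.
    by rewrite leq_addl addnK scalerA -exprD addnC.
  have H0 : W k = 0.
    apply: (@uniq_coef R X N (fun q => W q) (fun _ => 0) _ (Ordinal kN)) => i.
    by rewrite claim big1 // => q _; rewrite scaler0.
  move: H0; rewrite /W /= eqxx leqNgt lk /= sub0r => /eqP.
  by rewrite oppr_eq0 => /eqP.
have kn1 : (k.+1 <= n.+1)%N by exact: ltnW.
exists (fun j : 'I_k.+1 => cf s t (widen_ord kn1 j)) => m.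
rewrite Hcf.
pose F (j : nat) := (m%:R : R[i]) ^+ j *: cf s t (inord j).
transitivity (\sum_(j < n.+1) F j).
  by apply: eq_bigr => j _; rewrite /F inord_val.
rewrite (bigID (fun j : 'I_n.+1 => (j < k.+1)%N)) /= [X in _ + X]big1 ?addr0 => [|j]; last first.
  by rewrite -leqNgt => kj; rewrite /F inord_val zero ?scaler0.
rewrite -(big_ord_widen _ F kn1); apply: eq_bigr => j _; rewrite /F.
congr (_ *: cf s t _); apply: val_inj; rewrite /= inordK //.
exact: leq_trans (ltn_ord j) kn1.
Qed.
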